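(* Let $\mathcal{H}_A,\mathcal{H}_B$ be finite-dimensional Hilbert spaces, let $|\Psi\rangle,|\Phi\rangle\in\mathcal{H}_A\otimes\mathcal{H}_B$ be unit vectors, and let $\alpha,\beta\in\mathbb{C}$ be such that $|\Gamma\rangle=\alpha|\Psi\rangle+\beta|\Phi\rangle$ is a unit vector (no condition on $|\alpha|^2+|\beta|^2$ is imposed). Then for every $t\in(0,1)$, $$E(\Gamma)\ge\max\{L_1(t),L_2(t)\},$$ where $$L_1(t)=\frac{(1-t)|\beta|^2}{1-t(1-|\alpha|^2)}E(\Phi)-\frac{1-t}{t}E(\Psi)-\frac{1}{t}h_2(t),$$ $$L_2(t)=\frac{(1-t)|\alpha|^2}{1-t(1-|\beta|^2)}E(\Psi)-\frac{1-t}{t}E(\Phi)-\frac{1}{t}h_2(t).$$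
   Context: $S(\rho)=-\mathrm{Tr}(\rho\log\rho)$ is the von Neumann entropy (logarithm base 2). For a unit vector $|\chi\rangle\in\mathcal{H}_A\otimes\mathcal{H}_B$, its entanglement is $E(\chi)=S(\mathrm{Tr}_B|\chi\rangle\langle\chi|)$. $h_2(x)=-x\log x-(1-x)\log(1-x)$ is the binary entropy function. *)

(* Defs.v *)
From Stdlib Require Export Reals.
Open Scope R_scope.

Definition Cpx : Type := (R * R)%type.
Definition C0 : Cpx := (0, 0).
Definition C1 : Cpx := (1, 0).
Definition Cadd (z w : Cpx) : Cpx := (fst z + fst w, snd z + snd w).
Definition Cmul (z w : Cpx) : Cpx :=
  (fst z * fst w - snd z * snd w, fst z * snd w + snd z * fst w).
Definition Cconj (z : Cpx) : Cpx := (fst z, - snd z).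
Definition RtoC (r : R) : Cpx := (r, 0).
Definition Cnorm2 (z : Cpx) : R := fst z * fst z + snd z * snd z.

Fixpoint Rsum (n : nat) (f : nat -> R) : R :=
  match n with O => 0 | S k => Rsum k f + f k end.
Fixpoint Csum (n : nat) (f : nat -> Cpx) : Cpx :=
  match n with O => C0 | S k => Cadd (Csum k f) (f k) end.

(** Logarithm base 2 and the convention 0 log 0 = 0. *)
Definition log2 (x : R) : R := ln x / ln 2.
Definition xlog2x (x : R) : R := if Rle_dec x 0 then 0 else x * log2 x.
Definition h2 (x : R) : R := - xlog2x x - xlog2x (1 - x).

(** A vector of H_A ⊗ H_B with dim H_A = dA, dim H_B = dB is given by its
    coefficients x i j (i < dA, j < dB) in the product basis. *)
Definition bivec : Type := nat -> nat -> Cpx.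

Definition is_unit_vec (dA dB : nat) (x : bivec) : Prop :=
  Rsum dA (fun i => Rsum dB (fun j => Cnorm2 (x i j))) = 1.

(** Reduced density matrix Tr_B |x><x| : entries (i,j), i,j < dA. *)
Definition red_dm (dB : nat) (x : bivec) : nat -> nat -> Cpx :=
  fun i j => Csum dB (fun k => Cmul (x i k) (Cconj (x j k))).

(** lam (k < d) is the list of eigenvalues of the d x d matrix rho (with
    multiplicity): rho = sum_k lam_k |u_k><u_k| for an orthonormal basis
    (u_k)_{k<d}, u_k having coordinates u k i. *)
Definition is_spectrum (d : nat) (rho : nat -> nat -> Cpx) (lam : nat -> R) : Prop :=
  exists u : nat -> nat -> Cpx,
    (forall k l, (k < d)%nat -> (l < d)%nat ->
       Csum d (fun i => Cmul (u k i) (Cconj (u l i))) =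
       (if Nat.eqb k l then C1 else C0)) /\
    (forall i j, (i < d)%nat -> (j < d)%nat ->
       rho i j = Csum d (fun k => Cmul (RtoC (lam k)) (Cmul (u k i) (Cconj (u k j))))).

(** Von Neumann entropy -Tr(rho log rho) computed from the spectrum lam. *)
Definition vN_of_spectrum (d : nat) (lam : nat -> R) : R :=
  - Rsum d (fun k => xlog2x (lam k)).

(** E(x) = e : e is the von Neumann entropy of Tr_B |x><x|. (The spectrum is
    unique up to permutation and always exists, so this relation is a
    total function.) *)
Definition Ent (dA dB : nat) (x : bivec) (e : R) : Prop :=
  exists lam, is_spectrum dA (red_dm dB x) lam /\ e = vN_of_spectrum dA lam.

Definition lincomb (a b : Cpx) (x y : bivec) : bivec :=
  fun i j => Cadd (Cmul a (x i j)) (Cmul b (y i j)).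

(* Main.v *)
From Pilot Require Import Defs.
From Stdlib Require Import Reals Lra Lia Psatz Ring Field Rtopology ClassicalEpsilon Classical ZArith FunctionalExtensionality.
Import Pilot.Defs.
Open Scope R_scope.

Lemma Ceq (z w : Cpx) : fst z = fst w -> snd z = snd w -> z = w.
Proof. destruct z, w; simpl; intros; subst; reflexivity. Qed.

Lemma Rsum_ext n f g : (forall i, (i < n)%nat -> f i = g i) -> Rsum n f = Rsum n g.
Proof. induction n; simpl; intros; auto. rewrite IHn, H; auto. Qed.

Lemma Rsum_plus n f g : Rsum n (fun i => f i + g i) = Rsum n f + Rsum n g.
Proof. induction n; simpl; [ring|rewrite IHn; ring]. Qed.

Lemma Rsum_minus n f g : Rsum n (fun i => f i - g i) = Rsum n f - Rsum n g.
Proof. induction n; simpl; [ring|rewrite IHn; ring]. Qed.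

Lemma Rsum_scal n c f : Rsum n (fun i => c * f i) = c * Rsum n f.
Proof. induction n; simpl; [ring|rewrite IHn; ring]. Qed.

Lemma Rsum_scalr n c f : Rsum n (fun i => f i * c) = Rsum n f * c.
Proof. induction n; simpl; [ring|rewrite IHn; ring]. Qed.

Lemma Rsum_opp n f : Rsum n (fun i => - f i) = - Rsum n f.
Proof. induction n; simpl; [ring|rewrite IHn; ring]. Qed.

Lemma Rsum_0 n : Rsum n (fun _ => 0) = 0.
Proof. induction n; simpl; [ring|rewrite IHn; ring]. Qed.

Lemma Rsum_0' n f : (forall i, (i<n)%nat -> f i = 0) -> Rsum n f = 0.
Proof. intros; rewrite (Rsum_ext n f (fun _ => 0)); auto; apply Rsum_0. Qed.

Lemma Rsum_le n f g : (forall i, (i < n)%nat -> f i <= g i) -> Rsum n f <= Rsum n g.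
Proof. induction n; simpl; intros; [lra|]. assert (f n <= g n) by auto.
  assert (Rsum n f <= Rsum n g) by auto. lra. Qed.

Lemma Rsum_nonneg n f : (forall i, (i < n)%nat -> 0 <= f i) -> 0 <= Rsum n f.
Proof. intros; rewrite <- (Rsum_0 n); apply Rsum_le; auto. Qed.

Lemma Rsum_swap n m (f : nat -> nat -> R) :
  Rsum n (fun i => Rsum m (fun j => f i j)) = Rsum m (fun j => Rsum n (fun i => f i j)).
Proof.
  induction n; simpl. rewrite Rsum_0; auto.
  rewrite IHn, <- Rsum_plus; auto.
Qed.

Lemma Rsum_term_le n f k : (forall i, (i < n)%nat -> 0 <= f i) -> (k < n)%nat -> f k <= Rsum n f.
Proof.
  induction n; simpl; intros. lia.
  destruct (Nat.eq_dec k n). subst. assert (0 <= Rsum n f) by (apply Rsum_nonneg; auto). lra.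
  assert (f k <= Rsum n f) by (apply IHn; auto; lia). assert (0 <= f n) by auto. lra.
Qed.

Lemma Rsum_nonneg_eq0 n f k : (forall i, (i < n)%nat -> 0 <= f i) -> Rsum n f = 0 -> (k < n)%nat -> f k = 0.
Proof.
  intros. assert (f k <= Rsum n f) by (apply Rsum_term_le; auto). assert (0 <= f k) by auto. lra.
Qed.

Lemma Rsum_delta n k a : (k < n)%nat -> Rsum n (fun j => if Nat.eqb k j then a j else 0) = a k.
Proof.
  induction n; simpl; intros. lia.
  destruct (Nat.eq_dec k n). subst. rewrite Nat.eqb_refl.
  rewrite Rsum_0'. ring. intros. destruct (Nat.eqb_spec n i); [lia|auto].
  destruct (Nat.eqb_spec k n); [lia|]. rewrite IHn; [ring|lia].
Qed.

Lemma Rsum_delta' n k a : (k < n)%nat -> Rsum n (fun j => if Nat.eqb j k then a j else 0) = a k.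
Proof.
  intros. rewrite <- (Rsum_delta n k a); auto. apply Rsum_ext; intros.
  rewrite Nat.eqb_sym; auto.
Qed.

Lemma Rsum_add n m f : Rsum (n + m) f = Rsum n f + Rsum m (fun i => f (n + i)%nat).
Proof. induction m; simpl. rewrite Nat.add_0_r; ring. rewrite Nat.add_succ_r; simpl; rewrite IHm; ring. Qed.

Lemma Csum_fst n f : fst (Csum n f) = Rsum n (fun i => fst (f i)).
Proof. induction n; simpl; auto. rewrite IHn; auto. Qed.
Lemma Csum_snd n f : snd (Csum n f) = Rsum n (fun i => snd (f i)).
Proof. induction n; simpl; auto. rewrite IHn; auto. Qed.

Lemma Cnorm2_nonneg z : 0 <= Cnorm2 z.
Proof. unfold Cnorm2; nra. Qed.

Definition Copp (z : Cpx) : Cpx := (- fst z, - snd z).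
Definition Csub (z w : Cpx) : Cpx := Cadd z (Copp w).

Lemma Cring_theory : ring_theory C0 C1 Cadd Cmul Csub Copp (@eq Cpx).
Proof.
  constructor; intros; apply Ceq; unfold Cadd, Cmul, Csub, Copp, C0, C1; simpl; ring.
Qed.
Add Ring Cring : Cring_theory.

Ltac cring := apply Ceq; unfold Cadd, Cmul, Csub, Copp, C0, C1, Cconj, RtoC; simpl; ring.

Lemma Csum_ext n f g : (forall i, (i < n)%nat -> f i = g i) -> Csum n f = Csum n g.
Proof. induction n; simpl; intros; auto. rewrite IHn, H; auto. Qed.
Lemma Csum_plus n f g : Csum n (fun i => Cadd (f i) (g i)) = Cadd (Csum n f) (Csum n g).
Proof. induction n; simpl. cring. rewrite IHn; ring. Qed.
Lemma Csum_scal n c f : Csum n (fun i => Cmul c (f i)) = Cmul c (Csum n f).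
Proof. induction n; simpl. cring. rewrite IHn; ring. Qed.
Lemma Csum_0 n : Csum n (fun _ => C0) = C0.
Proof. induction n; simpl; auto. rewrite IHn; ring. Qed.
Lemma Csum_swap n m (f : nat -> nat -> Cpx) :
  Csum n (fun i => Csum m (fun j => f i j)) = Csum m (fun j => Csum n (fun i => f i j)).
Proof. induction n; simpl. rewrite Csum_0; auto. rewrite IHn, <- Csum_plus; auto. Qed.
Lemma Csum_conj n f : Cconj (Csum n f) = Csum n (fun i => Cconj (f i)).
Proof. induction n; simpl. cring. rewrite <- IHn. cring. Qed.
Lemma Csum_delta n k a : (k < n)%nat -> Csum n (fun j => if Nat.eqb k j then a j else C0) = a k.
Proof.
  intros. apply Ceq; rewrite ?Csum_fst, ?Csum_snd.
  - rewrite <- (Rsum_delta n k (fun j => fst (a j))); auto. apply Rsum_ext; intros.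
    destruct (Nat.eqb k i); auto.
  - rewrite <- (Rsum_delta n k (fun j => snd (a j))); auto. apply Rsum_ext; intros.
    destruct (Nat.eqb k i); auto.
Qed.

Lemma Cconj_mul a b : Cconj (Cmul a b) = Cmul (Cconj a) (Cconj b).
Proof. cring. Qed.
Lemma Cconj_conj a : Cconj (Cconj a) = a.
Proof. apply Ceq; unfold Cconj; simpl; ring. Qed.
Lemma Cconj_add a b : Cconj (Cadd a b) = Cadd (Cconj a) (Cconj b).
Proof. cring. Qed.
Lemma Cnorm2_conj z : Cnorm2 (Cconj z) = Cnorm2 z.
Proof. unfold Cnorm2, Cconj; simpl; ring. Qed.
Lemma Cnorm2_mul a b : Cnorm2 (Cmul a b) = Cnorm2 a * Cnorm2 b.
Proof. unfold Cnorm2, Cmul; simpl; ring. Qed.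
Lemma Cnorm2_fst z : Cnorm2 z = fst (Cmul (Cconj z) z).
Proof. unfold Cnorm2, Cmul, Cconj; simpl; ring. Qed.

Definition dot (n : nat) (x y : nat -> Cpx) : Cpx :=
  Csum n (fun i => Cmul (Cconj (x i)) (y i)).
Definition nrm2 (n : nat) (x : nat -> Cpx) : R := Rsum n (fun i => Cnorm2 (x i)).
Definition orthonormal (n M : nat) (e : nat -> nat -> Cpx) : Prop :=
  forall k l, (k < M)%nat -> (l < M)%nat -> dot n (e k) (e l) = if Nat.eqb k l then C1 else C0.
Definition lin (M : nat) (c : nat -> Cpx) (e : nat -> nat -> Cpx) : nat -> Cpx :=
  fun i => Csum M (fun k => Cmul (c k) (e k i)).

Lemma dot_ext n x x' y y' : (forall i, (i<n)%nat -> x i = x' i) -> (forall i, (i<n)%nat -> y i = y' i) ->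
  dot n x y = dot n x' y'.
Proof. intros; unfold dot; apply Csum_ext; intros; rewrite H, H0; auto. Qed.

Lemma dot_conj n x y : dot n y x = Cconj (dot n x y).
Proof. unfold dot; rewrite Csum_conj; apply Csum_ext; intros; cring. Qed.

Lemma nrm2_dot n x : nrm2 n x = fst (dot n x x).
Proof. unfold nrm2, dot; rewrite Csum_fst; apply Rsum_ext; intros; apply Cnorm2_fst. Qed.

Lemma nrm2_nonneg n x : 0 <= nrm2 n x.
Proof. apply Rsum_nonneg; intros; apply Cnorm2_nonneg. Qed.

Lemma dot_lin_r n M x c e : dot n x (lin M c e) = Csum M (fun k => Cmul (c k) (dot n x (e k))).
Proof.
  unfold dot, lin.
  rewrite (Csum_ext n _ (fun i => Csum M (fun k => Cmul (c k) (Cmul (Cconj (x i)) (e k i))))).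
  rewrite Csum_swap. apply Csum_ext; intros. rewrite Csum_scal; auto.
  intros. rewrite <- Csum_scal. apply Csum_ext; intros. ring.
Qed.

Lemma dot_lin_l n M y c e : dot n (lin M c e) y = Csum M (fun k => Cmul (Cconj (c k)) (dot n (e k) y)).
Proof.
  rewrite dot_conj, dot_lin_r, Csum_conj. apply Csum_ext; intros.
  rewrite Cconj_mul, <- dot_conj; auto.
Qed.

Lemma dot_on_lin n M c e j : orthonormal n M e -> (j < M)%nat -> dot n (e j) (lin M c e) = c j.
Proof.
  intros. rewrite dot_lin_r.
  rewrite (Csum_ext M _ (fun k => if Nat.eqb j k then c k else C0)).
  apply Csum_delta; auto.
  intros. rewrite H; auto. destruct (Nat.eqb_spec j i); subst; cring.
Qed.

Lemma dot_add_r n x y z : dot n x (fun i => Cadd (y i) (z i)) = Cadd (dot n x y) (dot n x z).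
Proof. unfold dot; rewrite <- Csum_plus; apply Csum_ext; intros; ring. Qed.
Lemma dot_scal_r n x c y : dot n x (fun i => Cmul c (y i)) = Cmul c (dot n x y).
Proof. unfold dot; rewrite <- Csum_scal; apply Csum_ext; intros; ring. Qed.
Lemma dot_add_l n x y z : dot n (fun i => Cadd (y i) (z i)) x = Cadd (dot n y x) (dot n z x).
Proof. unfold dot; rewrite <- Csum_plus; apply Csum_ext; intros; rewrite Cconj_add; ring. Qed.
Lemma dot_scal_l n x c y : dot n (fun i => Cmul c (y i)) x = Cmul (Cconj c) (dot n y x).
Proof. unfold dot; rewrite <- Csum_scal; apply Csum_ext; intros; rewrite Cconj_mul; ring. Qed.

Definition coefs (n M : nat) (e : nat -> nat -> Cpx) x := fun k => dot n (e k) x.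
Definition resid n M e x : nat -> Cpx := fun i => Csub (x i) (lin M (coefs n M e x) e i).

Lemma fst_Csum_normsq M c : fst (Csum M (fun k => Cmul (c k) (Cconj (c k)))) = Rsum M (fun k => Cnorm2 (c k)).
Proof. rewrite Csum_fst; apply Rsum_ext; intros; unfold Cnorm2, Cmul, Cconj; simpl; ring. Qed.
Lemma fst_Csum_normsq' M c : fst (Csum M (fun k => Cmul (Cconj (c k)) (c k))) = Rsum M (fun k => Cnorm2 (c k)).
Proof. rewrite Csum_fst; apply Rsum_ext; intros; unfold Cnorm2, Cmul, Cconj; simpl; ring. Qed.

Lemma dot_sub_r n x y z : dot n x (fun i => Csub (y i) (z i)) = Csub (dot n x y) (dot n x z).
Proof. unfold dot, Csub; rewrite (Csum_ext n _ (fun i => Cadd (Cmul (Cconj (x i)) (y i)) (Cmul (Copp C1) (Cmul (Cconj (x i)) (z i))))).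
  rewrite Csum_plus, Csum_scal; ring. intros; ring. Qed.
Lemma dot_sub_l n x y z : dot n (fun i => Csub (y i) (z i)) x = Csub (dot n y x) (dot n z x).
Proof. rewrite dot_conj, dot_sub_r, (dot_conj n y x), (dot_conj n z x). cring. Qed.

Lemma resid_orth n M e x j : orthonormal n M e -> (j < M)%nat -> dot n (e j) (resid n M e x) = C0.
Proof. intros. unfold resid. rewrite dot_sub_r, dot_on_lin; auto. unfold coefs. ring. Qed.

Lemma pythag n M e x : orthonormal n M e ->
  nrm2 n x = Rsum M (fun k => Cnorm2 (dot n (e k) x)) + nrm2 n (resid n M e x).
Proof.
  intros. rewrite !nrm2_dot. unfold resid at 1 2.
  rewrite dot_sub_l, !dot_sub_r, !dot_lin_l, dot_lin_r.
  rewrite (Csum_ext M (fun k => Cmul (Cconj (coefs n M e x k)) (dot n (e k) (lin M (coefs n M e x) e)))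
             (fun k => Cmul (Cconj (coefs n M e x k)) (coefs n M e x k))).
  2:{ intros; rewrite dot_on_lin; auto. }
  rewrite (Csum_ext M (fun k => Cmul (coefs n M e x k) (dot n x (e k)))
             (fun k => Cmul (coefs n M e x k) (Cconj (coefs n M e x k)))).
  2:{ intros; unfold coefs; rewrite (dot_conj n (e i) x); auto. }
  unfold Csub, Copp, Cadd; simpl. rewrite fst_Csum_normsq, fst_Csum_normsq'.
  unfold coefs. rewrite fst_Csum_normsq'. ring.
Qed.

Lemma bessel n M e x : orthonormal n M e ->
  Rsum M (fun k => Cnorm2 (dot n (e k) x)) <= nrm2 n x.
Proof. intros. rewrite (pythag n M e x); auto. pose proof (nrm2_nonneg n (resid n M e x)). lra. Qed.

Lemma Rsum_const n c : Rsum n (fun _ => c) = INR n * c.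
Proof. induction n; simpl; [ring|]. rewrite IHn; destruct n; simpl; ring. Qed.

Definition delta_vec (i : nat) : nat -> Cpx := fun j => if Nat.eqb i j then C1 else C0.

Lemma orth_dim n M e : orthonormal n M e -> (M <= n)%nat.
Proof.
  intros. assert (INR M <= INR n).
  { assert (Rsum M (fun m => nrm2 n (e m)) = INR M).
    { replace (INR M) with (Rsum M (fun _ => 1)) by (rewrite Rsum_const; ring). apply Rsum_ext; intros. rewrite nrm2_dot, H; auto.
      rewrite Nat.eqb_refl; auto. }
    rewrite <- H0. unfold nrm2. rewrite Rsum_swap. replace (INR n) with (Rsum n (fun _ => 1)) by (rewrite Rsum_const; ring).
    apply Rsum_le; intros.
    pose proof (bessel n M e (delta_vec i) H).
    assert (nrm2 n (delta_vec i) = 1).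
    { unfold nrm2, delta_vec. rewrite <- (Rsum_delta n i (fun _ => 1)); auto. apply Rsum_ext; intros.
      destruct (Nat.eqb i i0); unfold Cnorm2, C1, C0; simpl; ring. }
    rewrite H3 in H2. eapply Rle_trans; [|apply H2]. right. apply Rsum_ext; intros.
    rewrite <- (Cnorm2_conj (e i0 i)). f_equal. unfold dot, delta_vec.
    rewrite (Csum_ext n _ (fun j => if Nat.eqb i j then Cconj (e i0 j) else C0)).
    rewrite Csum_delta; auto.
    intros. destruct (Nat.eqb i i1); cring. }
  apply INR_le; auto.
Qed.

Definition incr (phi : nat -> nat) := forall p, (phi p < phi (S p))%nat.

Lemma incr_ge phi : incr phi -> forall p, (p <= phi p)%nat.
Proof. intros H p; induction p; [lia|]. specialize (H p); lia. Qed.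

Lemma incr_mono phi : incr phi -> forall p q, (p <= q)%nat -> (phi p <= phi q)%nat.
Proof. intros H p q Hpq; induction Hpq; [lia|]. specialize (H m); lia. Qed.

Lemma incr_comp phi psi : incr phi -> incr psi -> incr (fun p => phi (psi p)).
Proof. intros H1 H2 p. specialize (H2 p). pose proof (incr_mono phi H1 (S (psi p)) (psi (S p))).
  specialize (H1 (psi p)). lia. Qed.

Lemma cv_sub u l phi : incr phi -> Un_cv u l -> Un_cv (fun p => u (phi p)) l.
Proof.
  intros Hi Hc eps He. destruct (Hc eps He) as [N HN]. exists N; intros.
  apply HN. pose proof (incr_ge phi Hi n). lia.
Qed.

Lemma extract1 (u : nat -> R) : (forall p, -1 <= u p <= 1) ->
  exists phi l, incr phi /\ Un_cv (fun p => u (phi p)) l.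
Proof.
  intros Hb.
  destruct (Bolzano_Weierstrass u (fun x => -1 <= x <= 1) (compact_P3 (-1) 1) Hb) as [l Hl].
  assert (G : forall N k : nat, exists p, (N <= p)%nat /\ Rabs (u p - l) < / INR (S k)).
  { intros N k. assert (Hpos : 0 < / INR (S k)) by (apply Rinv_0_lt_compat, lt_0_INR; lia).
    destruct (Hl (disc l (mkposreal _ Hpos)) N) as [p [Hp1 Hp2]].
    - exists (mkposreal _ Hpos). intros y Hy; exact Hy.
    - exists p; split; auto. }
  pose (g := fun N k => proj1_sig (constructive_indefinite_description _ (G N k))).
  assert (Hg : forall N k, (N <= g N k)%nat /\ Rabs (u (g N k) - l) < / INR (S k)).
  { intros; unfold g; destruct (constructive_indefinite_description _ (G N k)); simpl; auto. }
  pose (phi := fix f (k : nat) : nat := match k with O => g O O | S k' => g (S (f k')) (S k') end).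
  exists phi, l. split.
  - intros p. simpl. destruct (Hg (S (phi p)) (S p)). lia.
  - intros eps He. destruct (archimed (/ eps)) as [Ha _].
    assert (Hz : (0 <= up (/ eps))%Z).
    { apply le_IZR. pose proof (Rinv_0_lt_compat _ He). simpl; lra. }
    exists (Z.to_nat (up (/ eps))). intros p Hp. unfold Rdist.
    assert (Rabs (u (phi p) - l) < / INR (S p)).
    { destruct p; simpl; [apply (Hg O O)|apply (Hg _ (S p))]. }
    eapply Rlt_le_trans; [apply H|].
    assert (INR (S p) > / eps).
    { rewrite S_INR. apply le_INR in Hp. rewrite INR_IZR_INZ, Z2Nat.id in Hp; auto. lra. }
    rewrite <- (Rinv_inv eps). apply Rlt_le. apply Rinv_lt_contravar; auto.
    apply Rmult_lt_0_compat; [apply Rinv_0_lt_compat; auto|]. pose proof (Rinv_0_lt_compat _ He); lra.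
Qed.

Lemma extractC n (s : nat -> nat -> Cpx) :
  (forall p i, (i < n)%nat -> -1 <= fst (s p i) <= 1 /\ -1 <= snd (s p i) <= 1) ->
  exists phi (l : nat -> Cpx), incr phi /\ forall i, (i < n)%nat ->
    Un_cv (fun p => fst (s (phi p) i)) (fst (l i)) /\ Un_cv (fun p => snd (s (phi p) i)) (snd (l i)).
Proof.
  induction n; intros Hb.
  - exists (fun p => p), (fun _ => C0). split; [intro; lia|intros; lia].
  - destruct IHn as [phi [l [Hi Hl]]]. intros; apply Hb; lia.
    destruct (extract1 (fun p => fst (s (phi p) n))) as [psi1 [l1 [Hi1 Hl1]]].
    { intros; apply Hb; lia. }
    destruct (extract1 (fun p => snd (s (phi (psi1 p)) n))) as [psi2 [l2 [Hi2 Hl2]]].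
    { intros; apply Hb; lia. }
    exists (fun p => phi (psi1 (psi2 p))), (fun i => if Nat.eqb i n then (l1, l2) else l i).
    split. apply incr_comp; auto. apply incr_comp; auto.
    intros i Hin. destruct (Nat.eqb_spec i n).
    + subst; simpl. split.
      * apply (cv_sub (fun p => fst (s (phi (psi1 p)) n)) l1 psi2); auto.
      * apply Hl2.
    + assert (i < n)%nat by lia. destruct (Hl i H) as [A B]. split.
      * apply (cv_sub (fun p => fst (s (phi p) i)) _ (fun p => psi1 (psi2 p))); auto. apply incr_comp; auto.
      * apply (cv_sub (fun p => snd (s (phi p) i)) _ (fun p => psi1 (psi2 p))); auto. apply incr_comp; auto.
Qed.

Lemma cv_Rsum n (f : nat -> nat -> R) (g : nat -> R) :
  (forall i, (i < n)%nat -> Un_cv (fun p => f p i) (g i)) ->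
  Un_cv (fun p => Rsum n (f p)) (Rsum n g).
Proof.
  induction n; simpl; intros.
  - intros eps He; exists O; intros; unfold Rdist; rewrite Rminus_diag, Rabs_R0; auto.
  - apply CV_plus; auto.
Qed.

Lemma cv_const c : Un_cv (fun _ => c) c.
Proof. intros eps He; exists O; intros; unfold Rdist; rewrite Rminus_diag, Rabs_R0; auto. Qed.

Definition Qf n N (r : nat -> R) (psi : nat -> nat -> Cpx) (v : nat -> Cpx) : R :=
  Rsum N (fun a => r a * Cnorm2 (dot n (psi a) v)).
Definition Rho n N (r : nat -> R) (psi : nat -> nat -> Cpx) (v : nat -> Cpx) : nat -> Cpx :=
  lin N (fun a => Cmul (RtoC (r a)) (dot n (psi a) v)) psi.
Definition Bf n N r psi (w v : nat -> Cpx) : Cpx := dot n w (Rho n N r psi v).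

Lemma Bf_expand n N r psi w v :
  Bf n N r psi w v = Csum N (fun a => Cmul (RtoC (r a)) (Cmul (Cconj (dot n (psi a) w)) (dot n (psi a) v))).
Proof. unfold Bf, Rho. rewrite dot_lin_r. apply Csum_ext; intros. rewrite (dot_conj n (psi i) w). ring. Qed.

Lemma Bf_herm n N r psi w v : Bf n N r psi w v = Cconj (Bf n N r psi v w).
Proof. rewrite !Bf_expand, Csum_conj. apply Csum_ext; intros. cring. Qed.

Lemma Qf_Bf n N r psi v : Qf n N r psi v = fst (Bf n N r psi v v).
Proof. rewrite Bf_expand, Csum_fst. unfold Qf. apply Rsum_ext; intros.
  unfold Cnorm2, Cmul, Cconj, RtoC; simpl; ring. Qed.

Lemma Qf_nonneg n N r psi v : (forall a, (a < N)%nat -> 0 <= r a) -> 0 <= Qf n N r psi v.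
Proof. intros; apply Rsum_nonneg; intros; apply Rmult_le_pos; auto; apply Cnorm2_nonneg. Qed.

Definition vcomb (v : nat -> Cpx) (c : Cpx) (w : nat -> Cpx) : nat -> Cpx := fun i => Cadd (v i) (Cmul c (w i)).
Definition vscal (c : Cpx) (w : nat -> Cpx) : nat -> Cpx := fun i => Cmul c (w i).

Lemma dot_vcomb n x v c w : dot n x (vcomb v c w) = Cadd (dot n x v) (Cmul c (dot n x w)).
Proof. unfold vcomb. rewrite dot_add_r. rewrite (dot_scal_r n x c w). auto. Qed.

Lemma Qf_vcomb n N r psi v (eps : R) w :
  Qf n N r psi (vcomb v (RtoC eps) w) = Qf n N r psi v + 2 * eps * fst (Bf n N r psi w v) + eps * eps * Qf n N r psi w.
Proof.
  unfold Qf. rewrite Bf_expand, Csum_fst. rewrite <- Rsum_scal, <- Rsum_scal, <- Rsum_plus, <- Rsum_plus.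
  apply Rsum_ext; intros. rewrite dot_vcomb. unfold Cnorm2, Cmul, Cconj, RtoC, Cadd; simpl; ring.
Qed.

Lemma nrm2_vcomb n v (eps : R) w :
  nrm2 n (vcomb v (RtoC eps) w) = nrm2 n v + 2 * eps * fst (dot n w v) + eps * eps * nrm2 n w.
Proof.
  unfold nrm2, dot. rewrite Csum_fst. rewrite <- Rsum_scal, <- Rsum_scal, <- Rsum_plus, <- Rsum_plus.
  apply Rsum_ext; intros. unfold vcomb, Cnorm2, Cmul, Cconj, RtoC, Cadd; simpl; ring.
Qed.

Lemma Qf_scal n N r psi c v : Qf n N r psi (vscal c v) = Cnorm2 c * Qf n N r psi v.
Proof. unfold Qf, vscal. rewrite <- Rsum_scal. apply Rsum_ext; intros. rewrite dot_scal_r, Cnorm2_mul. ring. Qed.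
Lemma nrm2_scal n c v : nrm2 n (vscal c v) = Cnorm2 c * nrm2 n v.
Proof. unfold nrm2, vscal. rewrite <- Rsum_scal. apply Rsum_ext; intros. rewrite Cnorm2_mul. ring. Qed.

Lemma nrm2_zero n v i : nrm2 n v = 0 -> (i < n)%nat -> v i = C0.
Proof.
  intros. assert (Cnorm2 (v i) = 0).
  { apply (Rsum_nonneg_eq0 n (fun i => Cnorm2 (v i))); auto. intros; apply Cnorm2_nonneg. }
  unfold Cnorm2 in H1. apply Ceq; unfold C0; simpl; nra.
Qed.

Lemma dot_zero_r n x v : (forall i, (i < n)%nat -> v i = C0) -> dot n x v = C0.
Proof. intros. unfold dot. rewrite (Csum_ext n _ (fun _ => C0)). apply Csum_0. intros; rewrite H; auto; cring. Qed.

Lemma real_quad_zero X Y : (forall eps, 2 * eps * X + eps * eps * Y <= 0) -> X = 0.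
Proof.
  intros H. destruct (Rtotal_order X 0) as [Hx|[Hx|Hx]]; auto.
  - set (e := X / (Rabs Y + 1)). specialize (H e).
    assert (Hp : 0 < Rabs Y + 1) by (pose proof (Rabs_pos Y); lra).
    assert (e * (Rabs Y + 1) = X) by (unfold e; field; lra).
    assert (e < 0) by (unfold e; apply Rdiv_neg_pos; auto).
    assert (-Y <= Rabs Y) by (rewrite <- Rabs_Ropp; apply RRle_abs). rewrite <- H0 in H.
    assert (0 < e * e) by nra. assert (0 <= Rabs Y) by apply Rabs_pos. nra.
  - set (e := X / (Rabs Y + 1)). specialize (H e).
    assert (Hp : 0 < Rabs Y + 1) by (pose proof (Rabs_pos Y); lra).
    assert (e * (Rabs Y + 1) = X) by (unfold e; field; lra).
    assert (e > 0) by (unfold e; apply Rdiv_pos_pos; auto).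
    assert (-Y <= Rabs Y) by (rewrite <- Rabs_Ropp; apply RRle_abs). rewrite <- H0 in H.
    assert (0 < e * e) by nra. assert (0 <= Rabs Y) by apply Rabs_pos. nra.
Qed.

Definition perp n M (e : nat -> nat -> Cpx) v := forall m, (m < M)%nat -> dot n (e m) v = C0.

Lemma perp_vcomb n M e v c w : perp n M e v -> perp n M e w -> perp n M e (vcomb v c w).
Proof. intros H1 H2 m Hm. rewrite dot_vcomb, H1, H2; auto. cring. Qed.
Lemma perp_vscal n M e c w : perp n M e w -> perp n M e (vscal c w).
Proof. intros H2 m Hm. unfold vscal. rewrite dot_scal_r, H2; auto. cring. Qed.

Lemma variational n N r psi M e v (Mx : R) :
  perp n M e v -> Qf n N r psi v = Mx -> nrm2 n v = 1 ->
  (forall u, perp n M e u -> Qf n N r psi u <= Mx * nrm2 n u) ->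
  forall w, perp n M e w -> Bf n N r psi w v = Cmul (RtoC Mx) (dot n w v).
Proof.
  intros Hv HQ Hn Hmax.
  assert (Hre : forall w, perp n M e w -> fst (Bf n N r psi w v) = Mx * fst (dot n w v)).
  { intros w Hw.
    assert (fst (Bf n N r psi w v) - Mx * fst (dot n w v) = 0); [|lra].
    apply (real_quad_zero _ (Qf n N r psi w - Mx * nrm2 n w)). intros eps.
    pose proof (Hmax (vcomb v (RtoC eps) w) (perp_vcomb _ _ _ _ _ _ Hv Hw)).
    rewrite Qf_vcomb, nrm2_vcomb in H. rewrite HQ, Hn in H. nra. }
  intros w Hw. apply Ceq.
  - rewrite Hre; auto. unfold Cmul, RtoC; simpl; ring.
  - pose proof (Hre (vscal (0,1) w) (perp_vscal _ _ _ _ _ Hw)).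
    unfold Bf in H. unfold vscal in H. rewrite !dot_scal_l in H. fold (Bf n N r psi w v) in H.
    unfold Cmul, Cconj, RtoC in *; simpl in *. lra.
Qed.

Lemma dot_self_snd n x : snd (dot n x x) = 0.
Proof. unfold dot. rewrite Csum_snd. apply Rsum_0'. intros. unfold Cmul, Cconj; simpl; ring. Qed.
Lemma dot_self n x : dot n x x = RtoC (nrm2 n x).
Proof. apply Ceq. rewrite nrm2_dot; auto. rewrite dot_self_snd; auto. Qed.

Lemma Cnorm2_RtoC c : Cnorm2 (RtoC c) = c * c.
Proof. unfold Cnorm2, RtoC; simpl; ring. Qed.

Lemma normalize n v : 0 < nrm2 n v -> nrm2 n (vscal (RtoC (/ sqrt (nrm2 n v))) v) = 1.
Proof.
  intros. rewrite nrm2_scal, Cnorm2_RtoC. pose proof (sqrt_lt_R0 _ H).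
  rewrite <- Rinv_mult, sqrt_sqrt; [field|]; lra.
Qed.

Lemma cauchy_schwarz n x y : Cnorm2 (dot n x y) <= nrm2 n x * nrm2 n y.
Proof.
  destruct (Req_dec (nrm2 n x) 0) as [H0|H0].
  - rewrite dot_conj, dot_zero_r. unfold Cnorm2, Cconj, C0; simpl. rewrite H0. lra.
    intros; apply (nrm2_zero n); auto.
  - assert (Hp : 0 < nrm2 n x) by (pose proof (nrm2_nonneg n x); lra).
    set (s := sqrt (nrm2 n x)). pose proof (sqrt_lt_R0 _ Hp) as Hs. fold s in Hs.
    set (e0 := vscal (RtoC (/ s)) x).
    assert (Ho : orthonormal n 1 (fun _ => e0)).
    { intros k l Hk Hl. replace k with O by lia. replace l with O by lia. simpl.
      rewrite dot_self. unfold e0, s. rewrite normalize; auto. }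
    pose proof (bessel n 1 (fun _ => e0) y Ho). simpl in H.
    unfold e0, vscal in H. rewrite dot_scal_l, Cnorm2_mul, Cnorm2_conj, Cnorm2_RtoC in H.
    assert (s * s = nrm2 n x) by (unfold s; apply sqrt_sqrt; lra).
    assert (/ s * / s * Cnorm2 (dot n x y) <= nrm2 n y) by lra.
    apply (Rmult_le_compat_l (s * s)) in H2; [|nra].
    replace (s * s * (/ s * / s * Cnorm2 (dot n x y))) with (Cnorm2 (dot n x y)) in H2 by (field; lra).
    rewrite <- H1; auto.
Qed.

Lemma cv_dot_fst n x (s : nat -> nat -> Cpx) l :
  (forall i, (i < n)%nat -> Un_cv (fun p => fst (s p i)) (fst (l i)) /\ Un_cv (fun p => snd (s p i)) (snd (l i))) ->
  Un_cv (fun p => fst (dot n x (s p))) (fst (dot n x l)).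
Proof.
  intros. unfold dot. rewrite Csum_fst.
  apply (Un_cv_ext (fun p => Rsum n (fun i => fst (x i) * fst (s p i) + snd (x i) * snd (s p i)))).
  { intros; rewrite Csum_fst; apply Rsum_ext; intros; unfold Cmul, Cconj; simpl; ring. }
  rewrite (Rsum_ext n _ (fun i => fst (x i) * fst (l i) + snd (x i) * snd (l i))).
  2: intros; unfold Cmul, Cconj; simpl; ring.
  apply cv_Rsum; intros. destruct (H i H0). apply CV_plus; apply CV_mult; auto; apply cv_const.
Qed.

Lemma cv_dot_snd n x (s : nat -> nat -> Cpx) l :
  (forall i, (i < n)%nat -> Un_cv (fun p => fst (s p i)) (fst (l i)) /\ Un_cv (fun p => snd (s p i)) (snd (l i))) ->
  Un_cv (fun p => snd (dot n x (s p))) (snd (dot n x l)).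
Proof.
  intros. unfold dot. rewrite Csum_snd.
  apply (Un_cv_ext (fun p => Rsum n (fun i => fst (x i) * snd (s p i) + (- snd (x i)) * fst (s p i)))).
  { intros; rewrite Csum_snd; apply Rsum_ext; intros; unfold Cmul, Cconj; simpl; ring. }
  rewrite (Rsum_ext n _ (fun i => fst (x i) * snd (l i) + (- snd (x i)) * fst (l i))).
  2: intros; unfold Cmul, Cconj; simpl; ring.
  apply cv_Rsum; intros. destruct (H i H0). apply CV_plus; apply CV_mult; auto; apply cv_const.
Qed.

Lemma cv_nrm2 n (s : nat -> nat -> Cpx) l :
  (forall i, (i < n)%nat -> Un_cv (fun p => fst (s p i)) (fst (l i)) /\ Un_cv (fun p => snd (s p i)) (snd (l i))) ->
  Un_cv (fun p => nrm2 n (s p)) (nrm2 n l).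
Proof.
  intros. unfold nrm2, Cnorm2. apply cv_Rsum; intros. destruct (H i H0). apply CV_plus; apply CV_mult; auto.
Qed.

Lemma cv_Qf n N r psi (s : nat -> nat -> Cpx) l :
  (forall i, (i < n)%nat -> Un_cv (fun p => fst (s p i)) (fst (l i)) /\ Un_cv (fun p => snd (s p i)) (snd (l i))) ->
  Un_cv (fun p => Qf n N r psi (s p)) (Qf n N r psi l).
Proof.
  intros. unfold Qf, Cnorm2. apply cv_Rsum; intros. apply CV_mult. apply cv_const.
  pose proof (cv_dot_fst n (psi i) s l H). pose proof (cv_dot_snd n (psi i) s l H).
  apply CV_plus; apply CV_mult; auto.
Qed.

Lemma Qf_unit_bound n N r psi v : (forall a, (a < N)%nat -> 0 <= r a) -> nrm2 n v = 1 ->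
  Qf n N r psi v <= Rsum N (fun a => r a * nrm2 n (psi a)).
Proof.
  intros. unfold Qf. apply Rsum_le; intros. apply Rmult_le_compat_l; auto.
  pose proof (cauchy_schwarz n (psi i) v). rewrite H0 in H2. lra.
Qed.

Lemma Qf_zero_vec n N r psi v : (forall i, (i < n)%nat -> v i = C0) -> Qf n N r psi v = 0.
Proof. intros. unfold Qf. apply Rsum_0'. intros. rewrite dot_zero_r; auto. unfold Cnorm2, C0; simpl; ring. Qed.

Lemma maximizer n N r psi M e : (forall a, (a < N)%nat -> 0 <= r a) ->
  (exists v0, perp n M e v0 /\ nrm2 n v0 = 1) ->
  exists v, perp n M e v /\ nrm2 n v = 1 /\
    forall u, perp n M e u -> Qf n N r psi u <= Qf n N r psi v * nrm2 n u.
Proof.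
  intros Hr Hex.
  set (Sset := fun x => exists v, perp n M e v /\ nrm2 n v = 1 /\ x = Qf n N r psi v).
  assert (Hb : bound Sset).
  { exists (Rsum N (fun a => r a * nrm2 n (psi a))). intros x [v [_ [Hv ->]]]. apply Qf_unit_bound; auto. }
  assert (Hne : exists x, Sset x). { destruct Hex as [v0 [H1 H2]]. exists (Qf n N r psi v0), v0; auto. }
  destruct (completeness Sset Hb Hne) as [Mx [Hub Hlub]].
  assert (Happ : forall p : nat, exists v, perp n M e v /\ nrm2 n v = 1 /\ Mx - / INR (S p) < Qf n N r psi v).
  { intros p. apply NNPP; intro Hn.
    assert (is_upper_bound Sset (Mx - / INR (S p))).
    { intros x [v [H1 [H2 ->]]]. apply Rnot_lt_le. intro. apply Hn. exists v; auto. }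
    apply Hlub in H. assert (0 < / INR (S p)) by (apply Rinv_0_lt_compat, lt_0_INR; lia). lra. }
  set (s := fun p => proj1_sig (constructive_indefinite_description _ (Happ p))).
  assert (Hs : forall p, perp n M e (s p) /\ nrm2 n (s p) = 1 /\ Mx - / INR (S p) < Qf n N r psi (s p)).
  { intros; unfold s; destruct (constructive_indefinite_description _ (Happ p)); simpl; auto. }
  destruct (extractC n s) as [phi [l [Hphi Hl]]].
  { intros p i Hi. destruct (Hs p) as [_ [Hn _]].
    assert (Cnorm2 (s p i) <= 1).
    { rewrite <- Hn. apply (Rsum_term_le n (fun i => Cnorm2 (s p i))); auto. intros; apply Cnorm2_nonneg. }
    unfold Cnorm2 in H. split; split; nra. }
  set (t := fun p => s (phi p)).
  assert (Hl' : forall i, (i < n)%nat -> Un_cv (fun p => fst (t p i)) (fst (l i)) /\ Un_cv (fun p => snd (t p i)) (snd (l i))) by exact Hl.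
  assert (Hnl : nrm2 n l = 1).
  { apply (UL_sequence (fun p => nrm2 n (t p))). apply cv_nrm2; auto.
    apply (Un_cv_ext (fun _ => 1)). intros; unfold t; destruct (Hs (phi n0)) as [_ [H _]]; auto. apply cv_const. }
  assert (Hpl : perp n M e l).
  { intros m Hm. apply Ceq.
    - apply (UL_sequence (fun p => fst (dot n (e m) (t p)))). apply cv_dot_fst; auto.
      apply (Un_cv_ext (fun _ => 0)). intros; unfold t; destruct (Hs (phi n0)) as [H _]; rewrite H; auto. apply cv_const.
    - apply (UL_sequence (fun p => snd (dot n (e m) (t p)))). apply cv_dot_snd; auto.
      apply (Un_cv_ext (fun _ => 0)). intros; unfold t; destruct (Hs (phi n0)) as [H _]; rewrite H; auto. apply cv_const. }
  assert (HQl : Qf n N r psi l = Mx).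
  { apply (UL_sequence (fun p => Qf n N r psi (t p))). apply cv_Qf; auto.
    intros eps He. destruct (archimed (/ eps)) as [Ha _].
    assert (Hz : (0 <= up (/ eps))%Z).
    { apply le_IZR. pose proof (Rinv_0_lt_compat _ He). simpl; lra. }
    exists (Z.to_nat (up (/ eps))). intros p Hp. unfold Rdist.
    destruct (Hs (phi p)) as [H1 [H2 H3]]. fold (t p) in H3.
    assert (Qf n N r psi (t p) <= Mx) by (apply Hub; exists (t p); unfold t; auto).
    assert (INR (S (phi p)) > / eps).
    { pose proof (incr_ge phi Hphi p). rewrite S_INR. apply le_INR in Hp. apply le_INR in H0.
      rewrite INR_IZR_INZ, Z2Nat.id in Hp; auto. lra. }
    assert (/ INR (S (phi p)) < eps).
    { rewrite <- (Rinv_inv eps). apply Rinv_lt_contravar; auto.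
      apply Rmult_lt_0_compat; [apply Rinv_0_lt_compat; auto|]. pose proof (Rinv_0_lt_compat _ He); lra. }
    rewrite Rabs_left1; lra. }
  exists l. split; auto. split; auto. intros u Hu.
  destruct (Req_dec (nrm2 n u) 0) as [H0|H0].
  - rewrite Qf_zero_vec, H0. lra. intros; apply (nrm2_zero n); auto.
  - assert (Hp : 0 < nrm2 n u) by (pose proof (nrm2_nonneg n u); lra).
    set (u' := vscal (RtoC (/ sqrt (nrm2 n u))) u).
    assert (Qf n N r psi u' <= Mx).
    { apply Hub. exists u'. split; [apply perp_vscal; auto|]. split; auto. apply normalize; auto. }
    unfold u' in H. rewrite Qf_scal, Cnorm2_RtoC in H.
    pose proof (sqrt_lt_R0 _ Hp). rewrite <- Rinv_mult, sqrt_sqrt in H by lra.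
    rewrite HQl. apply (Rmult_le_compat_l (nrm2 n u)) in H; [|lra].
    rewrite <- Rmult_assoc, Rinv_r, Rmult_1_l in H by lra. lra.
Qed.

Definition eigen n N r psi M (e : nat -> nat -> Cpx) (lam : nat -> R) :=
  forall m, (m < M)%nat -> 0 <= lam m /\ forall i, (i < n)%nat -> Rho n N r psi (e m) i = Cmul (RtoC (lam m)) (e m i).

Lemma Bf_eig_l n N r psi M e lam m v : eigen n N r psi M e lam -> (m < M)%nat ->
  Bf n N r psi (e m) v = Cmul (RtoC (lam m)) (dot n (e m) v).
Proof.
  intros He Hm. rewrite Bf_herm. unfold Bf.
  rewrite (dot_ext n v v _ (fun i => Cmul (RtoC (lam m)) (e m i))).
  rewrite dot_scal_r, Cconj_mul, <- dot_conj. f_equal; cring.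
  auto. intros; apply He; auto.
Qed.

Lemma eig_step n N r psi M e lam v : orthonormal n M e -> eigen n N r psi M e lam ->
  perp n M e v -> nrm2 n v = 1 ->
  (forall u, perp n M e u -> Qf n N r psi u <= Qf n N r psi v * nrm2 n u) ->
  forall i, (i < n)%nat -> Rho n N r psi v i = Cmul (RtoC (Qf n N r psi v)) (v i).
Proof.
  intros Ho He Hp Hn Hmax.
  set (Mx := Qf n N r psi v).
  set (z := fun i => Csub (Rho n N r psi v i) (Cmul (RtoC Mx) (v i))).
  assert (Hz : perp n M e z).
  { intros m Hm. unfold z. rewrite dot_sub_r. fold (Bf n N r psi (e m) v).
    rewrite (Bf_eig_l n N r psi M e lam); auto. rewrite dot_scal_r, Hp; auto. cring. }
  pose proof (variational n N r psi M e v Mx Hp eq_refl Hn Hmax z Hz).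
  assert (dot n z z = C0).
  { unfold z at 2. rewrite dot_sub_r, dot_scal_r. fold (Bf n N r psi z v). rewrite H. cring. }
  assert (nrm2 n z = 0) by (rewrite nrm2_dot, H0; auto).
  intros i Hi. pose proof (nrm2_zero n z i H1 Hi). unfold z in H2.
  apply Ceq; [apply (f_equal fst) in H2 | apply (f_equal snd) in H2];
  unfold Csub, Cadd, Copp, C0, Cmul, RtoC in *; simpl in *; lra.
Qed.

Lemma Rho_zero n N r psi w : (forall a, (a < N)%nat -> 0 <= r a) -> Qf n N r psi w = 0 ->
  forall i, (i < n)%nat -> Rho n N r psi w i = C0.
Proof.
  intros Hr HQ i Hi. unfold Rho, lin. rewrite (Csum_ext N _ (fun _ => C0)). apply Csum_0.
  intros a Ha. assert (r a * Cnorm2 (dot n (psi a) w) = 0).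
  { apply (Rsum_nonneg_eq0 N (fun a => r a * Cnorm2 (dot n (psi a) w))); auto.
    intros; apply Rmult_le_pos; auto; apply Cnorm2_nonneg. }
  destruct (Rmult_integral _ _ H) as [H1|H1].
  - rewrite H1. cring.
  - assert (dot n (psi a) w = C0). { unfold Cnorm2 in H1. apply Ceq; unfold C0; simpl; nra. }
    rewrite H0. cring.
Qed.

Lemma spec_final n N r psi M e lam : (forall a, (a < N)%nat -> 0 <= r a) ->
  orthonormal n M e -> eigen n N r psi M e lam ->
  (forall w, perp n M e w -> Qf n N r psi w = 0) ->
  forall v, Qf n N r psi v = Rsum M (fun m => lam m * Cnorm2 (dot n (e m) v)).
Proof.
  intros Hr Ho He H0 v.
  set (w := resid n M e v).
  assert (Hw : perp n M e w) by (intros m Hm; apply resid_orth; auto).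
  assert (HR := Rho_zero n N r psi w Hr (H0 w Hw)).
  rewrite Qf_Bf. unfold Bf.
  rewrite (dot_ext n v (fun i => Cadd (lin M (coefs n M e v) e i) (w i)) _ (Rho n N r psi v)).
  2:{ intros. unfold w, resid. ring. } 2: auto.
  rewrite dot_add_l. fold (Bf n N r psi w v). rewrite Bf_herm. unfold Bf at 1.
  rewrite (dot_zero_r n v (Rho n N r psi w)); auto.
  rewrite dot_lin_l.
  rewrite (Csum_ext M _ (fun m => Cmul (RtoC (lam m)) (Cmul (Cconj (coefs n M e v m)) (coefs n M e v m)))).
  2:{ intros. fold (Bf n N r psi (e i) v). rewrite (Bf_eig_l n N r psi M e lam); auto. unfold coefs. ring. }
  unfold Cadd at 1. simpl. rewrite Csum_fst. replace (fst (Cconj C0)) with 0 by (unfold Cconj, C0; simpl; auto). rewrite Rplus_0_r.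
  apply Rsum_ext; intros. unfold coefs, Cnorm2, Cmul, Cconj, RtoC; simpl; ring.
Qed.

Definition ext (M : nat) (e : nat -> nat -> Cpx) v : nat -> nat -> Cpx := fun m => if Nat.eqb m M then v else e m.

Lemma orth_extend n M e v : orthonormal n M e -> perp n M e v -> nrm2 n v = 1 -> orthonormal n (S M) (ext M e v).
Proof.
  intros Ho Hp Hn k l Hk Hl. unfold ext.
  destruct (Nat.eqb_spec k M); destruct (Nat.eqb_spec l M); subst.
  - rewrite Nat.eqb_refl, dot_self, Hn; auto.
  - rewrite dot_conj, Hp by lia. destruct (Nat.eqb_spec M l); [lia|]. cring.
  - rewrite Hp by lia. destruct (Nat.eqb_spec k M); [lia|]. auto.
  - apply Ho; lia.
Qed.

Lemma spec_aux n N r psi : (forall a, (a < N)%nat -> 0 <= r a) ->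
  forall k M e lam, orthonormal n M e -> eigen n N r psi M e lam -> (n - M <= k)%nat ->
  exists M' e' lam', orthonormal n M' e' /\ (forall m, (m < M')%nat -> 0 <= lam' m) /\
    forall v, Qf n N r psi v = Rsum M' (fun m => lam' m * Cnorm2 (dot n (e' m) v)).
Proof.
  intros Hr k. induction k as [|k IH]; intros M e lam Ho He Hk;
  (destruct (classic (exists w, perp n M e w /\ 0 < Qf n N r psi w)) as [[w [Hw HQ]]|Hno];
   [|exists M, e, lam; split; auto; split; [intros; apply He; auto|];
     apply spec_final; auto; intros w Hw; pose proof (Qf_nonneg n N r psi w Hr);
     apply NNPP; intro; apply Hno; exists w; split; auto; lra]).
  all: assert (Hnw : 0 < nrm2 n w) by
      (destruct (Req_dec (nrm2 n w) 0) as [H0|H0];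
       [rewrite Qf_zero_vec in HQ; [lra|intros; apply (nrm2_zero n); auto]
       |pose proof (nrm2_nonneg n w); lra]).
  all: destruct (maximizer n N r psi M e Hr) as [v [Hv [Hvn Hmax]]];
       [exists (vscal (RtoC (/ sqrt (nrm2 n w))) w); split; [apply perp_vscal; auto|apply normalize; auto]|].
  all: pose proof (orth_extend n M e v Ho Hv Hvn) as Ho'; pose proof (orth_dim _ _ _ Ho').
  - lia.
  - apply (IH (S M) (ext M e v) (fun m => if Nat.eqb m M then Qf n N r psi v else lam m)); auto; [|lia].
    intros m Hm. unfold ext. destruct (Nat.eqb_spec m M).
    + split. apply Qf_nonneg; auto. apply (eig_step n N r psi M e lam); auto.
    + apply He; lia.
Qed.

Lemma spectral n N r psi : (forall a, (a < N)%nat -> 0 <= r a) ->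
  exists M e lam, orthonormal n M e /\ (forall m, (m < M)%nat -> 0 <= lam m) /\
    forall v, Qf n N r psi v = Rsum M (fun m => lam m * Cnorm2 (dot n (e m) v)).
Proof.
  intros Hr. apply (spec_aux n N r psi Hr n O (fun _ _ => C0) (fun _ => 0)); [intros k l Hk; lia|intros m Hm; lia|lia].
Qed.

Definition eta (x : R) : R := - xlog2x x.

Lemma ln2_pos : 0 < ln 2.
Proof. pose proof ln_lt_2; lra. Qed.

Lemma eta_pos x : 0 < x -> eta x = - x * ln x / ln 2.
Proof. intros. unfold eta, xlog2x, log2. destruct (Rle_dec x 0); [lra|]. field. pose proof ln2_pos; lra. Qed.
Lemma eta_nonpos x : x <= 0 -> eta x = 0.
Proof. intros. unfold eta, xlog2x. destruct (Rle_dec x 0); [lra|lra]. Qed.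
Lemma eta_0 : eta 0 = 0.
Proof. apply eta_nonpos; lra. Qed.

Lemma ln_le_sub1 y : 0 < y -> ln y <= y - 1.
Proof. intros. pose proof (exp_ineq1_le (ln y)). rewrite exp_ln in H0; auto. lra. Qed.

Lemma eta_tangent X x : 0 < X -> 0 <= x -> eta x * ln 2 <= - x * ln X - x + X.
Proof.
  intros HX Hx. destruct (Req_dec x 0) as [->|Hx0].
  - rewrite eta_0. lra.
  - assert (0 < x) by lra. rewrite eta_pos; auto. pose proof ln2_pos.
    replace (- x * ln x / ln 2 * ln 2) with (- x * ln x) by (field; lra).
    pose proof (ln_le_sub1 (X / x)). assert (0 < X / x) by (apply Rdiv_lt_0_compat; auto).
    specialize (H1 H2). unfold Rdiv in H1. rewrite ln_mult, ln_Rinv in H1; auto; [|apply Rinv_0_lt_compat; auto].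
    apply (Rmult_le_compat_l x) in H1; [|lra].
    replace (x * (X * / x - 1)) with (X - x) in H1 by (field; lra). nra.
Qed.

Lemma eta_nonneg x : 0 <= x <= 1 -> 0 <= eta x.
Proof.
  intros. destruct (Req_dec x 0) as [->|]. rewrite eta_0; lra.
  rewrite eta_pos by lra. pose proof ln2_pos.
  assert (ln x <= 0). { destruct (Req_dec x 1). subst; rewrite ln_1; lra. left; rewrite <- ln_1; apply ln_increasing; lra. }
  apply Rmult_le_pos; [nra|]. left; apply Rinv_0_lt_compat; auto.
Qed.

Lemma jensen K (w x : nat -> R) :
  (forall m, (m < K)%nat -> 0 <= w m) -> (forall m, (m < K)%nat -> 0 <= x m) ->
  Rsum K w <= 1 ->
  Rsum K (fun m => w m * eta (x m)) <= eta (Rsum K (fun m => w m * x m)).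
Proof.
  intros Hw Hx Hs. set (X := Rsum K (fun m => w m * x m)).
  assert (HX0 : 0 <= X) by (apply Rsum_nonneg; intros; apply Rmult_le_pos; auto).
  destruct (Req_dec X 0) as [HX|HX].
  - rewrite HX, eta_0. right. apply Rsum_0'. intros m Hm.
    assert (w m * x m = 0) by (apply (Rsum_nonneg_eq0 K (fun m => w m * x m)); auto; intros; apply Rmult_le_pos; auto).
    destruct (Rmult_integral _ _ H); [rewrite H0; ring|rewrite H0, eta_0; ring].
  - assert (HXp : 0 < X) by lra. pose proof ln2_pos.
    assert (Rsum K (fun m => w m * eta (x m)) * ln 2 <= eta X * ln 2); [|nra].
    rewrite eta_pos by auto. replace (- X * ln X / ln 2 * ln 2) with (- X * ln X) by (field; lra).
    rewrite <- Rsum_scalr.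
    apply Rle_trans with (Rsum K (fun m => w m * (- x m * ln X - x m + X))).
    { apply Rsum_le; intros. rewrite Rmult_assoc. apply Rmult_le_compat_l; auto. apply eta_tangent; auto. }
    rewrite (Rsum_ext K _ (fun m => (- ln X - 1) * (w m * x m) + X * w m)) by (intros; ring).
    rewrite Rsum_plus, Rsum_scal, Rsum_scal. fold X.
    assert (X * Rsum K w <= X) by nra. nra.
Qed.

Lemma eta_mul a b : 0 <= a -> 0 <= b -> eta (a * b) = a * eta b + b * eta a.
Proof.
  intros. destruct (Req_dec a 0) as [->|]. rewrite Rmult_0_l, eta_0; ring.
  destruct (Req_dec b 0) as [->|]. rewrite Rmult_0_r, eta_0; ring.
  rewrite !eta_pos by nra. rewrite ln_mult by lra. field. pose proof ln2_pos; lra.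
Qed.

Lemma sum_delta_on n M e f m : orthonormal n M e -> (m < M)%nat ->
  Rsum M (fun m' => f m' * Cnorm2 (dot n (e m') (e m))) = f m.
Proof.
  intros Ho Hm. rewrite <- (Rsum_delta' M m f); auto. apply Rsum_ext; intros.
  rewrite Ho; auto. destruct (Nat.eqb_spec i m); unfold Cnorm2, C1, C0; simpl; ring.
Qed.

Lemma in_span n M e x : orthonormal n M e -> dot n x (resid n M e x) = C0 ->
  Rsum M (fun m => Cnorm2 (dot n (e m) x)) = nrm2 n x.
Proof.
  intros Ho H. set (w := resid n M e x).
  assert (E : dot n x w = dot n w w).
  { rewrite (dot_ext n x (fun i => Cadd (lin M (coefs n M e x) e i) (w i)) w w).
    rewrite dot_add_l, dot_lin_l. rewrite (Csum_ext M _ (fun _ => C0)). rewrite Csum_0. ring.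
    intros. unfold w. rewrite resid_orth; auto. ring.
    intros. unfold w, resid. ring. auto. }
  assert (H0 : dot n w w = C0) by (rewrite <- E; auto).
  rewrite (pythag n M e x Ho). fold w. rewrite nrm2_dot, H0. simpl. ring.
Qed.

Lemma Cnorm2_dot_sym n x y : Cnorm2 (dot n x y) = Cnorm2 (dot n y x).
Proof. rewrite (dot_conj n x y), Cnorm2_conj; auto. Qed.


Lemma upper_bound n N r psi M e lam :
  (forall a, (a < N)%nat -> 0 <= r a) -> (forall a, (a < N)%nat -> nrm2 n (psi a) = 1) ->
  orthonormal n M e -> (forall m, (m < M)%nat -> 0 <= lam m) ->
  (forall v, Qf n N r psi v = Rsum M (fun m => lam m * Cnorm2 (dot n (e m) v))) ->
  Rsum M (fun m => eta (lam m)) <= Rsum N (fun a => eta (r a)).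
Proof.
  intros Hr Hpsi Ho Hl HQ.
  assert (Hlam : forall m, (m < M)%nat -> lam m = Qf n N r psi (e m)).
  { intros. rewrite HQ, sum_delta_on; auto. }
  assert (Hspan : forall a, (a < N)%nat -> 0 < r a -> Rsum M (fun m => Cnorm2 (dot n (e m) (psi a))) = 1).
  { intros a Ha Hra. rewrite <- (Hpsi a Ha). apply in_span; auto.
    set (w := resid n M e (psi a)).
    assert (Qf n N r psi w = 0).
    { rewrite HQ. apply Rsum_0'. intros. unfold w; rewrite resid_orth; auto. unfold Cnorm2, C0; simpl; ring. }
    assert (r a * Cnorm2 (dot n (psi a) w) = 0).
    { apply (Rsum_nonneg_eq0 N (fun a => r a * Cnorm2 (dot n (psi a) w))); auto.
      intros; apply Rmult_le_pos; auto; apply Cnorm2_nonneg. }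
    assert (Cnorm2 (dot n (psi a) w) = 0).
    { destruct (Rmult_integral _ _ H0); auto; lra. }
    unfold Cnorm2 in H1. apply Ceq; unfold C0; simpl; nra. }
  assert (Hc0 : forall a m, (a < N)%nat -> 0 < r a -> (m < M)%nat -> lam m = 0 -> dot n (e m) (psi a) = C0).
  { intros a m Ha Hra Hm H0. rewrite Hlam in H0; auto. unfold Qf in H0.
    assert (r a * Cnorm2 (dot n (psi a) (e m)) = 0).
    { apply (Rsum_nonneg_eq0 N (fun a => r a * Cnorm2 (dot n (psi a) (e m)))); auto.
      intros; apply Rmult_le_pos; auto; apply Cnorm2_nonneg. }
    destruct (Rmult_integral _ _ H); [lra|]. rewrite dot_conj.
    unfold Cnorm2 in H1. apply Ceq; unfold C0, Cconj; simpl; nra. }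
  set (W := fun a m => if Rlt_dec 0 (lam m) then r a * Cnorm2 (dot n (e m) (psi a)) / lam m else 0).
  assert (HW0 : forall a m, (a < N)%nat -> 0 <= W a m).
  { intros. unfold W. destruct (Rlt_dec 0 (lam m)); [|lra]. apply Rmult_le_pos.
    apply Rmult_le_pos; auto; apply Cnorm2_nonneg. left; apply Rinv_0_lt_compat; auto. }
  assert (Hrow : forall a, (a < N)%nat -> Rsum M (W a) <= 1).
  { intros a Ha. destruct (Req_dec (r a) 0) as [Hr0|Hr0].
    { rewrite Rsum_0'. lra. intros. unfold W. rewrite Hr0. destruct (Rlt_dec 0 (lam i)); [field; lra|auto]. }
    assert (Hra : 0 < r a) by (pose proof (Hr a Ha); lra).
    set (c := fun m => dot n (e m) (psi a)).
    set (S := Rsum M (fun m => if Rlt_dec 0 (lam m) then Cnorm2 (c m) / lam m else 0)).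
    assert (HS : Rsum M (W a) = r a * S).
    { unfold S. rewrite <- Rsum_scal. apply Rsum_ext; intros. unfold W, c. destruct (Rlt_dec 0 (lam i)); [field; lra|ring]. }
    rewrite HS.
    set (d := fun m => if Rlt_dec 0 (lam m) then Cmul (c m) (RtoC (/ lam m)) else C0).
    set (v := lin M d e).
    assert (H1 : Qf n N r psi v = S).
    { rewrite HQ. unfold S. apply Rsum_ext; intros. unfold v. rewrite dot_on_lin; auto. unfold d.
      destruct (Rlt_dec 0 (lam i)). rewrite Cnorm2_mul, Cnorm2_RtoC. field. lra.
      unfold Cnorm2, C0; simpl; ring. }
    assert (H2 : dot n (psi a) v = RtoC S).
    { unfold v. rewrite dot_lin_r. apply Ceq.
      - rewrite Csum_fst. unfold S, RtoC; simpl. apply Rsum_ext; intros.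
        rewrite (dot_conj n (e i) (psi a)). fold (c i). unfold d. destruct (Rlt_dec 0 (lam i)).
        unfold Cnorm2, Cmul, Cconj, RtoC; simpl; field; lra. unfold C0, Cmul; simpl; ring.
      - rewrite Csum_snd. unfold RtoC; simpl. apply Rsum_0'. intros.
        rewrite (dot_conj n (e i) (psi a)). fold (c i). unfold d. destruct (Rlt_dec 0 (lam i)).
        unfold Cnorm2, Cmul, Cconj, RtoC; simpl; field; lra. unfold C0, Cmul; simpl; ring. }
    assert (H3 : r a * Cnorm2 (dot n (psi a) v) <= Qf n N r psi v).
    { unfold Qf. apply (Rsum_term_le N (fun a => r a * Cnorm2 (dot n (psi a) v))); auto.
      intros; apply Rmult_le_pos; auto; apply Cnorm2_nonneg. }
    rewrite H1, H2, Cnorm2_RtoC in H3.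
    assert (HS0 : 0 <= S).
    { apply Rsum_nonneg; intros. destruct (Rlt_dec 0 (lam i)); [|lra].
      apply Rmult_le_pos; [apply Cnorm2_nonneg|left; apply Rinv_0_lt_compat; auto]. }
    destruct (Req_dec S 0) as [->|HS1]; [lra|].
    assert (0 < S) by lra. assert (r a * S * S <= 1 * S) by lra.
    apply Rmult_le_reg_r in H0; auto. }
  assert (Hcol : forall a, (a < N)%nat -> Rsum M (fun m => W a m * eta (lam m)) <= eta (r a)).
  { intros a Ha. destruct (Req_dec (r a) 0) as [Hr0|Hr0].
    { rewrite Hr0, eta_0, Rsum_0'. lra. intros. unfold W. rewrite Hr0.
      destruct (Rlt_dec 0 (lam i)); [unfold Rdiv; ring|ring]. }
    assert (Hra : 0 < r a) by (pose proof (Hr a Ha); lra).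
    assert (r a = Rsum M (fun m => W a m * lam m)).
    { rewrite <- (Rmult_1_r (r a)) at 1. rewrite <- (Hspan a Ha Hra), <- Rsum_scal.
      apply Rsum_ext; intros. unfold W. destruct (Rlt_dec 0 (lam i)). field; lra.
      assert (lam i = 0) by (pose proof (Hl i H); lra). rewrite Hc0; auto. unfold Cnorm2, C0; simpl; ring. }
    rewrite H at 1. apply jensen; auto. }
  apply Rle_trans with (Rsum N (fun a => Rsum M (fun m => W a m * eta (lam m)))).
  2:{ apply Rsum_le; auto. }
  rewrite Rsum_swap. right. apply Rsum_ext; intros m Hm.
  rewrite Rsum_scalr. destruct (Rlt_dec 0 (lam m)).
  - replace (Rsum N (fun a => W a m)) with 1; [ring|].
    unfold W. destruct (Rlt_dec 0 (lam m)); [|lra].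
    unfold Rdiv. rewrite Rsum_scalr. rewrite (Rsum_ext N _ (fun a => r a * Cnorm2 (dot n (psi a) (e m)))).
    fold (Qf n N r psi (e m)). rewrite <- Hlam; auto. field; lra.
    intros; rewrite Cnorm2_dot_sym; auto.
  - assert (lam m = 0) by (pose proof (Hl m Hm); lra). rewrite H, eta_0. ring.
Qed.

Lemma lower_bound n M e lam (f : nat -> nat -> Cpx) (nu : nat -> R) (K : nat) q (Rv : (nat -> Cpx) -> R) :
  orthonormal n M e -> (forall m, (m < M)%nat -> 0 <= lam m) ->
  orthonormal n K f -> (forall j, (j < K)%nat -> 0 <= nu j) -> 0 <= q <= 1 ->
  (forall v, 0 <= Rv v) -> Rsum M (fun m => Rv (e m)) <= 1 - q ->
  (forall v, Rsum M (fun m => lam m * Cnorm2 (dot n (e m) v)) =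
             q * Rsum K (fun j => nu j * Cnorm2 (dot n (f j) v)) + Rv v) ->
  q * Rsum K (fun j => eta (nu j)) <= Rsum M (fun m => eta (lam m)).
Proof.
  intros Ho Hl Hf Hnu Hq HR HRs Hid.
  set (s := fun m => Rsum K (fun j => nu j * Cnorm2 (dot n (f j) (e m)))).
  assert (Hs0 : forall m, 0 <= s m) by (intros; apply Rsum_nonneg; intros; apply Rmult_le_pos; auto; apply Cnorm2_nonneg).
  assert (Hlam : forall m, (m < M)%nat -> lam m = q * s m + Rv (e m)).
  { intros. unfold s. rewrite <- Hid, sum_delta_on; auto. }
  assert (Hu : forall m, (m < M)%nat -> Rv (e m) <= 1 - q).
  { intros. eapply Rle_trans; [|apply HRs]. apply (Rsum_term_le M (fun m => Rv (e m))); auto. }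
  assert (HA : forall m, (m < M)%nat -> q * eta (s m) <= eta (lam m)).
  { intros m Hm. rewrite Hlam; auto. destruct (Req_dec q 1) as [Hq1|Hq1].
    - assert (Rv (e m) = 0) by (pose proof (Hu m Hm); pose proof (HR (e m)); lra).
      rewrite H, Hq1. rewrite !Rmult_1_l, Rplus_0_r. lra.
    - set (b := Rv (e m) / (1 - q)).
      assert (Hb : 0 <= b <= 1).
      { unfold b. pose proof (HR (e m)). pose proof (Hu m Hm). split.
        apply Rmult_le_pos; auto. left; apply Rinv_0_lt_compat; lra.
        apply (Rmult_le_reg_r (1 - q)); [lra|]. unfold Rdiv. rewrite Rmult_assoc, Rinv_l; lra. }
      pose proof (jensen 2 (fun k => if Nat.eqb k 0 then q else 1 - q) (fun k => if Nat.eqb k 0 then s m else b)).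
      simpl in H. assert (q * s m + Rv (e m) = 0 + q * s m + (1 - q) * b) by (unfold b; field; lra).
      rewrite H0. pose proof (eta_nonneg b Hb).
      assert (0 + q * eta (s m) + (1 - q) * eta b <= eta (0 + q * s m + (1 - q) * b)).
      { apply H; try lra. intros k Hk; destruct (Nat.eqb k 0); lra.
        intros k Hk; destruct (Nat.eqb k 0); [apply Hs0|lra]. }
      assert (0 <= (1 - q) * eta b) by (apply Rmult_le_pos; lra). lra. }
  assert (HB : forall m, (m < M)%nat -> Rsum K (fun j => Cnorm2 (dot n (f j) (e m)) * eta (nu j)) <= eta (s m)).
  { intros m Hm. unfold s. rewrite (Rsum_ext K (fun j => nu j * _) (fun j => Cnorm2 (dot n (f j) (e m)) * nu j)).
    apply jensen; auto. intros; apply Cnorm2_nonneg.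
    eapply Rle_trans; [apply bessel; eauto|]. rewrite nrm2_dot, Ho; auto. rewrite Nat.eqb_refl; simpl; lra.
    intros; ring. }
  destruct (Req_dec q 0) as [Hq0|Hq0].
  { rewrite Hq0, Rmult_0_l. apply Rsum_nonneg; intros. pose proof (HA i H). rewrite Hq0 in H0. lra. }
  assert (Hqp : 0 < q) by lra.
  apply Rle_trans with (Rsum M (fun m => q * eta (s m))).
  2:{ apply Rsum_le; auto. }
  rewrite Rsum_scal. apply Rmult_le_compat_l; [lra|].
  apply Rle_trans with (Rsum M (fun m => Rsum K (fun j => Cnorm2 (dot n (f j) (e m)) * eta (nu j)))).
  2:{ apply Rsum_le; auto. }
  rewrite Rsum_swap. right. apply Rsum_ext; intros j Hj. rewrite Rsum_scalr.
  destruct (Req_dec (nu j) 0) as [Hn0|Hn0]. { rewrite Hn0, eta_0. ring. }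
  replace (Rsum M (fun m => Cnorm2 (dot n (f j) (e m)))) with 1; [ring|].
  rewrite (Rsum_ext M _ (fun m => Cnorm2 (dot n (e m) (f j)))) by (intros; apply Cnorm2_dot_sym).
  rewrite in_span; auto. rewrite nrm2_dot, Hf; auto. rewrite Nat.eqb_refl; auto.
  set (w := resid n M e (f j)).
  assert (Hw : Rsum M (fun m => lam m * Cnorm2 (dot n (e m) w)) = 0).
  { apply Rsum_0'; intros. unfold w; rewrite resid_orth; auto. unfold Cnorm2, C0; simpl; ring. }
  rewrite Hid in Hw. pose proof (HR w).
  assert (0 <= Rsum K (fun j => nu j * Cnorm2 (dot n (f j) w))) by (apply Rsum_nonneg; intros; apply Rmult_le_pos; auto; apply Cnorm2_nonneg).
  assert (Rsum K (fun j => nu j * Cnorm2 (dot n (f j) w)) = 0) by nra.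
  assert (nu j * Cnorm2 (dot n (f j) w) = 0).
  { apply (Rsum_nonneg_eq0 K (fun j => nu j * Cnorm2 (dot n (f j) w))); auto. intros; apply Rmult_le_pos; auto; apply Cnorm2_nonneg. }
  destruct (Rmult_integral _ _ H2); [lra|]. unfold Cnorm2 in H3. apply Ceq; unfold C0; simpl; nra.
Qed.

Definition col (x : bivec) (k : nat) : nat -> Cpx := fun i => x i k.
Definition QX n dB (x : bivec) (v : nat -> Cpx) : R := Rsum dB (fun k => Cnorm2 (dot n (col x k) v)).

Lemma Csum_scal_r n c f : Csum n (fun i => Cmul (f i) c) = Cmul (Csum n f) c.
Proof. induction n; simpl. cring. rewrite IHn; ring. Qed.

Lemma sesq_form n K (c : nat -> R) (y : nat -> nat -> Cpx) (rho : nat -> nat -> Cpx) v :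
  (forall i j, (i < n)%nat -> (j < n)%nat -> rho i j = Csum K (fun k => Cmul (RtoC (c k)) (Cmul (y k i) (Cconj (y k j))))) ->
  fst (Csum n (fun i => Csum n (fun j => Cmul (Cmul (Cconj (v i)) (rho i j)) (v j)))) =
  Rsum K (fun k => c k * Cnorm2 (dot n (y k) v)).
Proof.
  intros Hr.
  rewrite (Csum_ext n _ (fun i => Csum n (fun j => Csum K (fun k =>
     Cmul (RtoC (c k)) (Cmul (Cmul (Cconj (v i)) (y k i)) (Cmul (Cconj (y k j)) (v j))))))).
  2:{ intros i Hi. apply Csum_ext; intros j Hj. rewrite Hr; auto.
      rewrite <- Csum_scal, <- Csum_scal_r. apply Csum_ext; intros; ring. }
  rewrite (Csum_ext n _ (fun i => Csum K (fun k => Csum n (fun j =>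
     Cmul (RtoC (c k)) (Cmul (Cmul (Cconj (v i)) (y k i)) (Cmul (Cconj (y k j)) (v j))))))).
  2:{ intros; apply Csum_swap. }
  rewrite Csum_swap, Csum_fst. apply Rsum_ext; intros k Hk.
  rewrite (Csum_ext n _ (fun i => Cmul (Cmul (RtoC (c k)) (Cmul (Cconj (v i)) (y k i))) (dot n (y k) v))).
  2:{ intros. unfold dot. rewrite <- Csum_scal. apply Csum_ext; intros; ring. }
  rewrite Csum_scal_r, Csum_scal.
  replace (Csum n (fun i => Cmul (Cconj (v i)) (y k i))) with (dot n v (y k)) by auto.
  rewrite (dot_conj n (y k) v). unfold Cnorm2, Cmul, Cconj, RtoC; simpl; ring.
Qed.

Definition spec_u (d : nat) (rho : nat -> nat -> Cpx) (lam : nat -> R) (u : nat -> nat -> Cpx) : Prop :=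
    (forall k l, (k < d)%nat -> (l < d)%nat ->
       Csum d (fun i => Cmul (u k i) (Cconj (u l i))) =
       (if Nat.eqb k l then C1 else C0)) /\
    (forall i j, (i < d)%nat -> (j < d)%nat ->
       rho i j = Csum d (fun k => Cmul (RtoC (lam k)) (Cmul (u k i) (Cconj (u k j))))).

Lemma spec_ex d rho lam : is_spectrum d rho lam -> exists u, spec_u d rho lam u.
Proof. intros [u H]; exists u; exact H. Qed.

Lemma spec_qf n dB x lam u : spec_u n (red_dm dB x) lam u ->
  forall v, QX n dB x v = Rsum n (fun m => lam m * Cnorm2 (dot n (u m) v)).
Proof.
  intros [_ Hd] v. unfold QX.
  rewrite (Rsum_ext dB _ (fun k => 1 * Cnorm2 (dot n (col x k) v))) by (intros; ring).
  rewrite <- (sesq_form n dB (fun _ => 1) (col x) (red_dm dB x) v).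
  rewrite <- (sesq_form n n lam u (red_dm dB x) v); auto.
  intros. unfold red_dm, col. apply Csum_ext; intros. cring.
Qed.

Lemma spec_orth n rho lam u : spec_u n rho lam u -> orthonormal n n u.
Proof.
  intros [Ho _] k l Hk Hl. specialize (Ho k l Hk Hl).
  replace (dot n (u k) (u l)) with (Cconj (Csum n (fun i => Cmul (u k i) (Cconj (u l i))))).
  rewrite Ho. destruct (Nat.eqb k l); cring.
  rewrite Csum_conj. unfold dot. apply Csum_ext; intros; cring.
Qed.

Lemma dot_delta n y i : (i < n)%nat -> dot n y (delta_vec i) = Cconj (y i).
Proof.
  intros. unfold dot, delta_vec.
  rewrite (Csum_ext n _ (fun j => if Nat.eqb i j then Cconj (y j) else C0)).
  apply Csum_delta; auto. intros. destruct (Nat.eqb i i0); cring.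
Qed.

Lemma spec_props n dB x lam u : is_unit_vec n dB x -> spec_u n (red_dm dB x) lam u ->
  (forall m, (m < n)%nat -> 0 <= lam m) /\ Rsum n lam = 1.
Proof.
  intros Hu Hs. pose proof (spec_orth _ _ _ _ Hs) as Ho. pose proof (spec_qf _ _ _ _ _ Hs) as Hq.
  split.
  - intros m Hm. pose proof (Hq (u m)).
    assert (Rsum n (fun m' => lam m' * Cnorm2 (dot n (u m') (u m))) = lam m).
    { rewrite <- (Rsum_delta' n m lam); auto. apply Rsum_ext; intros.
      rewrite Ho; auto. destruct (Nat.eqb_spec i m); unfold Cnorm2, C1, C0; simpl; ring. }
    rewrite <- H0, <- H. apply Rsum_nonneg; intros; apply Cnorm2_nonneg.
  - assert (Rsum n (fun i => QX n dB x (delta_vec i)) = 1).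
    { rewrite <- Hu. apply Rsum_ext; intros. unfold QX. apply Rsum_ext; intros.
      rewrite dot_delta, Cnorm2_conj; auto. }
    rewrite (Rsum_ext n _ (fun i => Rsum n (fun m => lam m * Cnorm2 (u m i)))) in H.
    rewrite Rsum_swap in H. rewrite <- H. apply Rsum_ext; intros.
    rewrite Rsum_scal. pose proof (Ho i i H0 H0). rewrite Nat.eqb_refl in H1.
    assert (nrm2 n (u i) = 1) by (rewrite nrm2_dot, H1; auto). unfold nrm2 in H2. rewrite H2. ring.
    intros. rewrite Hq. apply Rsum_ext; intros. rewrite dot_delta, Cnorm2_conj; auto.
Qed.

Lemma dot_col_lincomb n a b x y k v :
  dot n (col (lincomb a b x y) k) v = Cadd (Cmul (Cconj a) (dot n (col x k) v)) (Cmul (Cconj b) (dot n (col y k) v)).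
Proof.
  unfold col, lincomb. rewrite (dot_add_l n v (fun i => Cmul a (x i k)) (fun i => Cmul b (y i k))).
  rewrite (dot_scal_l n v a (fun i => x i k)), (dot_scal_l n v b (fun i => y i k)). auto.
Qed.

Lemma form_id (t : R) (al be P F : Cpx) : 1 - t * (1 - Cnorm2 be) <> 0 ->
  t * Cnorm2 (Cadd (Cmul (Cconj al) P) (Cmul (Cconj be) F)) + (1 - t) * Cnorm2 F =
  t * (1 - t) * Cnorm2 al / (1 - t * (1 - Cnorm2 be)) * Cnorm2 P +
  / (1 - t * (1 - Cnorm2 be)) * Cnorm2 (Cadd (Cmul (Cconj (Cmul (RtoC t) (Cmul al (Cconj be)))) P)
                                              (Cmul (Cconj (RtoC (1 - t * (1 - Cnorm2 be)))) F)).
Proof.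
  intros HD. destruct al as [a1 a2], be as [b1 b2], P as [p1 p2], F as [f1 f2].
  unfold Cnorm2, Cadd, Cmul, Cconj, RtoC in *; simpl in *.
  field. auto.
Qed.

Lemma QX_trace n dB x : Rsum n (fun i => QX n dB x (delta_vec i)) = Rsum n (fun i => Rsum dB (fun k => Cnorm2 (x i k))).
Proof. apply Rsum_ext; intros. unfold QX. apply Rsum_ext; intros. rewrite dot_delta, Cnorm2_conj; auto. Qed.

Lemma vN_eta n lam : vN_of_spectrum n lam = Rsum n (fun m => eta (lam m)).
Proof. unfold vN_of_spectrum, eta. rewrite Rsum_opp; auto. Qed.

Lemma main_bound dA dB Psi Phi alpha beta t EPsi EPhi EGamma :
  is_unit_vec dA dB Psi -> is_unit_vec dA dB Phi -> is_unit_vec dA dB (lincomb alpha beta Psi Phi) ->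
  Ent dA dB Psi EPsi -> Ent dA dB Phi EPhi -> Ent dA dB (lincomb alpha beta Psi Phi) EGamma ->
  0 < t < 1 ->
  EGamma >= (1 - t) * Cnorm2 alpha / (1 - t * (1 - Cnorm2 beta)) * EPsi - (1 - t) / t * EPhi - 1 / t * h2 t.
Proof.
  intros HuP HuF HuG [lP [HsP HEP]] [lF [HsF HEF]] [lG [HsG HEG]] Ht.
  set (n := dA) in *. set (Gam := lincomb alpha beta Psi Phi) in *.
  destruct (spec_ex _ _ _ HsP) as [uP HP]. destruct (spec_ex _ _ _ HsF) as [uF HF].
  destruct (spec_ex _ _ _ HsG) as [uG HG].
  destruct (spec_props _ _ _ _ _ HuP HP) as [HlP HsumP].
  destruct (spec_props _ _ _ _ _ HuF HF) as [HlF HsumF].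
  destruct (spec_props _ _ _ _ _ HuG HG) as [HlG HsumG].
  pose proof (spec_orth _ _ _ _ HP) as HoP. pose proof (spec_orth _ _ _ _ HF) as HoF.
  pose proof (spec_orth _ _ _ _ HG) as HoG.
  pose proof (spec_qf _ _ _ _ _ HP) as HqP. pose proof (spec_qf _ _ _ _ _ HF) as HqF.
  pose proof (spec_qf _ _ _ _ _ HG) as HqG.
  set (D := 1 - t * (1 - Cnorm2 beta)).
  assert (HD : 0 < D) by (unfold D; pose proof (Cnorm2_nonneg beta); nra).
  set (q := t * (1 - t) * Cnorm2 alpha / D).
  set (r := fun a => if Nat.ltb a n then t * lG a else (1 - t) * lF (a - n)%nat).
  set (psi := fun a => if Nat.ltb a n then uG a else uF (a - n)%nat).
  assert (Hr : forall a, (a < n + n)%nat -> 0 <= r a).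
  { intros. unfold r. destruct (Nat.ltb_spec a n). apply Rmult_le_pos; [lra|auto].
    apply Rmult_le_pos; [lra|apply HlF; lia]. }
  assert (Hsplit : forall (f : nat -> R), Rsum (n + n) f = Rsum n f + Rsum n (fun i => f (n + i)%nat)) by (intros; apply Rsum_add).
  assert (HQf : forall v, Qf n (n + n) r psi v = t * QX n dB Gam v + (1 - t) * QX n dB Phi v).
  { intros v. unfold Qf. rewrite Hsplit, HqG, HqF, <- !Rsum_scal. f_equal; apply Rsum_ext; intros i Hi; unfold r, psi.
    - destruct (Nat.ltb_spec i n); [ring|lia].
    - destruct (Nat.ltb_spec (n + i) n); [lia|]. replace (n + i - n)%nat with i by lia. ring. }
  destruct (spectral n (n + n) r psi Hr) as [M [e [lam [Ho [Hl HQ]]]]].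
  assert (Hup : Rsum M (fun m => eta (lam m)) <= t * EGamma + (1 - t) * EPhi + h2 t).
  { eapply Rle_trans. apply (upper_bound n (n + n) r psi M e lam); auto.
    { intros a Ha. unfold psi. destruct (Nat.ltb_spec a n).
      rewrite nrm2_dot, HoG; auto. rewrite Nat.eqb_refl; auto.
      rewrite nrm2_dot, HoF by lia. rewrite Nat.eqb_refl; auto. }
    right. rewrite Hsplit. rewrite HEG, HEF, !vN_eta.
    rewrite (Rsum_ext n (fun i => eta (r i)) (fun i => t * eta (lG i) + lG i * eta t)).
    rewrite (Rsum_ext n (fun i => eta (r (n + i)%nat)) (fun i => (1 - t) * eta (lF i) + lF i * eta (1 - t))).
    rewrite !Rsum_plus, !Rsum_scal, !Rsum_scalr, HsumG, HsumF. unfold h2, eta. ring.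
    - intros. unfold r. destruct (Nat.ltb_spec (n + i) n); [lia|]. replace (n + i - n)%nat with i by lia.
      apply eta_mul; [lra|auto].
    - intros. unfold r. destruct (Nat.ltb_spec i n); [|lia]. apply eta_mul; [lra|auto]. }
  set (w3 := lincomb (Cmul (RtoC t) (Cmul alpha (Cconj beta))) (RtoC D) Psi Phi).
  assert (Hid : forall v, t * QX n dB Gam v + (1 - t) * QX n dB Phi v = q * QX n dB Psi v + / D * QX n dB w3 v).
  { intros v. unfold QX. rewrite <- !Rsum_scal, <- !Rsum_plus. apply Rsum_ext; intros k Hk.
    unfold Gam, w3. rewrite !dot_col_lincomb. unfold q, D. apply form_id. fold D; lra. }
  assert (Hw3 : / D * Rsum n (fun i => QX n dB w3 (delta_vec i)) = 1 - q).
  { assert (Rsum n (fun i => t * QX n dB Gam (delta_vec i) + (1 - t) * QX n dB Phi (delta_vec i)) =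
            Rsum n (fun i => q * QX n dB Psi (delta_vec i) + / D * QX n dB w3 (delta_vec i))).
    { apply Rsum_ext; intros; apply Hid. }
    rewrite !Rsum_plus, !Rsum_scal, !QX_trace in H.
    unfold is_unit_vec in HuP, HuF, HuG. fold n Gam in HuG. fold n in HuP, HuF.
    rewrite HuP, HuF, HuG in H. rewrite QX_trace. lra. }
  assert (HRv0 : forall v, 0 <= / D * QX n dB w3 v).
  { intros. apply Rmult_le_pos. left; apply Rinv_0_lt_compat; auto. apply Rsum_nonneg; intros; apply Cnorm2_nonneg. }
  assert (Hq1 : 0 <= q <= 1).
  { split. unfold q. apply Rmult_le_pos. apply Rmult_le_pos. apply Rmult_le_pos; lra. apply Cnorm2_nonneg.
    left; apply Rinv_0_lt_compat; auto.
    assert (0 <= / D * Rsum n (fun i => QX n dB w3 (delta_vec i))).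
    { apply Rmult_le_pos. left; apply Rinv_0_lt_compat; auto. apply Rsum_nonneg; intros.
      apply Rsum_nonneg; intros; apply Cnorm2_nonneg. }
    lra. }
  assert (HRs : Rsum M (fun m => / D * QX n dB w3 (e m)) <= 1 - q).
  { rewrite <- Hw3, Rsum_scal. apply Rmult_le_compat_l. left; apply Rinv_0_lt_compat; auto.
    rewrite QX_trace. unfold QX. rewrite Rsum_swap, (Rsum_swap n dB). apply Rsum_le; intros k Hk.
    rewrite (Rsum_ext M _ (fun m => Cnorm2 (dot n (e m) (col w3 k)))) by (intros; apply Cnorm2_dot_sym).
    eapply Rle_trans. apply bessel; auto. right. unfold nrm2, col. auto. }
  assert (Hlow : q * EPsi <= Rsum M (fun m => eta (lam m))).
  { rewrite HEP, vN_eta. apply (lower_bound n M e lam uP lP n q (fun v => / D * QX n dB w3 v)); auto.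
    intros v. rewrite <- HQ, HQf, Hid, HqP. auto. }
  assert (Hfin : q * EPsi <= t * EGamma + (1 - t) * EPhi + h2 t) by lra.
  replace ((1 - t) * Cnorm2 alpha / D * EPsi - (1 - t) / t * EPhi - 1 / t * h2 t)
    with ((q * EPsi - (1 - t) * EPhi - h2 t) / t) by (unfold q; field; split; lra).
  apply Rle_ge. apply (Rmult_le_reg_r t); [lra|]. unfold Rdiv. rewrite Rmult_assoc, Rinv_l by lra. lra.
Qed.

Lemma lincomb_sym a b x y : lincomb b a y x = lincomb a b x y.
Proof. apply functional_extensionality; intro i; apply functional_extensionality; intro j.
  unfold lincomb. apply Ceq; unfold Cadd; simpl; ring. Qed.

Theorem theorem4 (dA dB : nat) (Psi Phi : bivec) (alpha beta : Cpx) (t : R)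
  (EPsi EPhi EGamma : R) :
  is_unit_vec dA dB Psi ->
  is_unit_vec dA dB Phi ->
  is_unit_vec dA dB (lincomb alpha beta Psi Phi) ->
  Ent dA dB Psi EPsi ->
  Ent dA dB Phi EPhi ->
  Ent dA dB (lincomb alpha beta Psi Phi) EGamma ->
  0 < t < 1 ->
  EGamma >=
  Rmax
    ((1 - t) * Cnorm2 beta / (1 - t * (1 - Cnorm2 alpha)) * EPhi
       - (1 - t) / t * EPsi - 1 / t * h2 t)
    ((1 - t) * Cnorm2 alpha / (1 - t * (1 - Cnorm2 beta)) * EPsi
       - (1 - t) / t * EPhi - 1 / t * h2 t).
Proof.
  intros H1 H2 H3 H4 H5 H6 Ht.
  pose proof (main_bound dA dB Psi Phi alpha beta t EPsi EPhi EGamma H1 H2 H3 H4 H5 H6 Ht) as A.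
  rewrite <- lincomb_sym in H3, H6.
  pose proof (main_bound dA dB Phi Psi beta alpha t EPhi EPsi EGamma H2 H1 H3 H5 H4 H6 Ht) as B.
  unfold Rmax. destruct (Rle_dec _ _); auto.
Qed.
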